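(* Let $R=k[x_1,\dots,x_n]$ be a standard graded polynomial ring over a field $k$, $I\subseteq R$ a homogeneous ideal and $(F_\bullet,d_\bullet)$ a homogeneous free resolution of $R/I$ with $F_0=R$. Write $F_1=F_1'\oplus\bigoplus_{i=1}^tRe_0^i$ where each $e_0^i$ generates a free direct summand, and write $d_2=d_2'+d_0^1+\cdots+d_0^t$ with $d_2':F_2\to F_1'$ and $d_0^i:F_2\to Re_0^i$ the components. For each $i$ let $\mathfrak a_i$ be a homogeneous ideal with $d_0^i(F_2)\subseteq\mathfrak a_ie_0^i$ and $(G^i_\bullet,m^i_\bullet)$ a homogeneous free resolution of $R/\mathfrak a_i$ with $G^i_0=R$. Let $K'=d_1(F_1')$, $K_0^i=(d_1(e_0^i))$ and $J=K'+\mathfrak a_1K_0^1+\cdots+\mathfrak a_tK_0^t$. For each $i$ let $(d_0^i)':F_2\to R$ be $d_0^i$ followed by $e_0^i\mapsto1$, and let $q^i_1:F_2\to G^i_1$, $q^i_k:F_{k+1}\to G^i_k$ ($k\ge2$) be homomorphisms with $m^i_1q^i_1=(d^i_0)'$ and $m^i_kq^i_k=q^i_{k-1}d_{k+1}$. Let $T_\bullet$ be the complex $\cdots\to F_3\xrightarrow{d_3}F_2\xrightarrow{d_2'}F_1'$ (with $F_1'$ in degree $0$, $F_i$ in degree $i-1$), and $B_\bullet$ the complex $\cdots\to\bigoplus_iG^i_2\xrightarrow{\oplus m_2^i}\bigoplus_iG^i_1\xrightarrow{\beta}R$ with $\beta(g_1,\dots,g_t)=-\sum_{i=1}^tm^i_1(g_i)\,d_1(e^i_0)$.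 Then $d_1|_{F_1'}:F_1'\to R$ together with the maps $(q^1_{k-1},\dots,q^t_{k-1})^T:F_k\to\bigoplus_iG^i_{k-1}$ ($k\ge2$) form a morphism of complexes $T_\bullet\to B_\bullet$ whose mapping cone is a free resolution of $R/J$.
   Context: The mapping cone has $R$ in degree $0$, $F_1'\oplus\bigoplus_iG^i_1$ in degree $1$, and $F_k\oplus\bigoplus_iG^i_k$ in degree $k\ge2$. It is called the iterated trimming complex. *)

(* Defs.v *)
From HB Require Import structures.
From mathcomp Require Import all_boot all_order all_algebra.
From mathcomp Require Import mpoly.
Set Implicit Arguments. Unset Strict Implicit. Unset Printing Implicit Defensive.
Import GRing.Theory.
Local Open Scope ring_scope.

(* Finite free R-modules R^c are column
   vectors 'cV_c; homomorphisms R^b -> R^a are matrices 'M_(a, b) acting on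
   the left. *)

Section Defs.
Variables (k : fieldType) (n : nat).
Local Notation R := {mpoly k[n]}.

Definition homog_of (d : nat) (p : R) : bool :=
  all (fun m : 'X_{1..n} => mdeg m == d) (msupp p).

Definition hcomp (d : nat) (p : R) : R :=
  \sum_(m <- msupp p | mdeg m == d) p@_m *: 'X_[m].

Definition is_ideal (I : R -> Prop) : Prop :=
  [/\ I 0, (forall x y, I x -> I y -> I (x + y)) & (forall r x, I x -> I (r * x))].

Definition homogeneous_ideal (I : R -> Prop) : Prop :=
  is_ideal I /\ forall p d, I p -> I (hcomp d p).

Definition mx_complex (c : nat -> nat) (D : forall j, 'M[R]_(c j, c j.+1)) :=
  forall j, D j *m D j.+1 = 0.

(* exact at C_{j+1} for every j >= 0 *)
Definition mx_exact_pos (c : nat -> nat) (D : forall j, 'M[R]_(c j, c j.+1)) :=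
  forall j (v : 'cV[R]_(c j.+1)), D j *m v = 0 ->
    exists w : 'cV[R]_(c j.+2), v = D j.+1 *m w.

Definition free_resolution (c : nat -> nat) (D : forall j, 'M[R]_(c j, c j.+1))
  (J : R -> Prop) : Prop :=
  [/\ c 0 = 1%N, mx_complex D, mx_exact_pos D &
      forall r, J r <-> exists (w : 'cV[R]_(c 1)) (i : 'I_(c 0)), (D 0 *m w) i 0 = r].

(* Homogeneity of a complex of graded free modules: sh j i is the degree of
   the i-th basis element of C_j, and every differential is homogeneous of
   degree 0, i.e. each entry of D j is zero or homogeneous of degree
   sh (j+1) col - sh j row. *)
Definition homogeneous_complex (c : nat -> nat) (D : forall j, 'M[R]_(c j, c j.+1))
  (sh : forall j, 'I_(c j) -> int) : Prop :=
  forall j (a : 'I_(c j)) (b : 'I_(c j.+1)),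
    D j a b = 0 \/
    exists d : nat, (sh j.+1 b - sh j a)%R = d%:Z /\ homog_of d (D j a b).

Definition homog_free_resolution (c : nat -> nat) (D : forall j, 'M[R]_(c j, c j.+1))
  (J : R -> Prop) : Prop :=
  free_resolution D J /\
  exists sh : forall j, 'I_(c j) -> int,
    (forall i : 'I_(c 0), sh 0 i = 0) /\ homogeneous_complex D sh.

Definition mx_chain_map (a b : nat -> nat)
  (dA : forall j, 'M[R]_(a j, a j.+1)) (dB : forall j, 'M[R]_(b j, b j.+1))
  (phi : forall j, 'M[R]_(b j, a j)) : Prop :=
  forall j, dB j *m phi j.+1 = phi j *m dA j.

(* Mapping cone of phi : A -> B:  Cone_0 = B_0, Cone_{j+1} = A_j (+) B_{j+1},
   with differential (x, y) |-> (- dA x, phi x + dB y). *)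
Definition cone_rank (a b : nat -> nat) (j : nat) : nat :=
  match j with 0 => b 0 | j'.+1 => (a j' + b j'.+1)%N end.

Definition cone_diff (a b : nat -> nat)
  (dA : forall j, 'M[R]_(a j, a j.+1)) (dB : forall j, 'M[R]_(b j, b j.+1))
  (phi : forall j, 'M[R]_(b j, a j)) (j : nat) :
  'M[R]_(cone_rank a b j, cone_rank a b j.+1) :=
  match j with
  | 0 => row_mx (phi 0) (dB 0)
  | j'.+1 => block_mx (- dA j') 0 (phi j'.+1) (dB j'.+1)
  end.

(* ranks of a resolution whose 0-th module is R and whose first module is
   F_1' (+) R^t, F_1' of rank p *)
Definition res_rank (p t : nat) (f : nat -> nat) (j : nat) : nat :=
  match j with 0 => 1%N | 1 => (p + t)%N | _ => f j end.

Definition res_rank0 (g : nat -> nat) (j : nat) : nat :=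
  match j with 0 => 1%N | _ => g j end.


End Defs.

Section Trimming.
Variables (k : fieldType) (n : nat).
Local Notation R := {mpoly k[n]}.
Variables (p t : nat) (f : nat -> nat).
(* F_0 = R, F_1 = F_1' (+) R e_0^1 (+) ... (+) R e_0^t (F_1' = first p
   coordinates, e_0^i = basis vector p + i), F_j of rank f j for j >= 2;
   d j : F_{j+1} -> F_j. *)
Variable d : forall j, 'M[R]_(res_rank p t f j, res_rank p t f j.+1).
Variables (g : 'I_t -> nat -> nat).
(* m i j : G^i_{j+1} -> G^i_j, G^i_0 = R *)
Variable m : forall i j, 'M[R]_(res_rank0 (g i) j, res_rank0 (g i) j.+1).
(* q i j = q^i_{j+1} : F_{j+2} -> G^i_{j+1} *)
Variable q : forall i j, 'M[R]_(g i j.+1, f j.+2).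
Variable a : 'I_t -> R -> Prop.

Definition d1 : 'M[R]_(1, p + t) := d 0.
Definition d2 : 'M[R]_(p + t, f 2) := d 1.

Definition d1' : 'M[R]_(1, p) := lsubmx d1.
Definition d1e (i : 'I_t) : R := rsubmx d1 0 i.
Definition d2' : 'M[R]_(p, f 2) := usubmx d2.
(* the t x f2 matrix whose i-th row is (d_0^i)' : F_2 -> R *)
Definition d20 : 'M[R]_(t, f 2) := dsubmx d2.

Definition T_rank (j : nat) : nat :=
  match j with 0 => p | j'.+1 => f j'.+2 end.
Definition T_diff (j : nat) : 'M[R]_(T_rank j, T_rank j.+1) :=
  match j return 'M[R]_(T_rank j, T_rank j.+1) with
  | 0 => d2'
  | j'.+1 => d j'.+2
  end.

Definition B_rank (j : nat) : nat :=
  match j with 0 => 1%N | j'.+1 => (\sum_(i < t) g i j'.+1)%N end.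
Definition beta : 'M[R]_(1, \sum_(i < t) g i 1) :=
  \mxrow_(i < t) ((- d1e i) *: (m i 0 : 'M[R]_(1, g i 1))).
Definition Gdiag (j : nat) :
  'M[R]_(\sum_(i < t) g i j.+1, \sum_(i < t) g i j.+2) :=
  \mxblock_(i < t, i' < t)
     (if i == i' then conform_mx 0 (m i j.+1 : 'M[R]_(g i j.+1, g i j.+2))
      else 0).
Definition B_diff (j : nat) : 'M[R]_(B_rank j, B_rank j.+1) :=
  match j return 'M[R]_(B_rank j, B_rank j.+1) with
  | 0 => beta
  | j'.+1 => Gdiag j'
  end.

Definition trim_map (j : nat) : 'M[R]_(B_rank j, T_rank j) :=
  match j return 'M[R]_(B_rank j, T_rank j) with
  | 0 => d1'
  | j'.+1 => \mxcol_(i < t) q i j'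
  end.

Definition trim_ideal : R -> Prop :=
  fun r => exists (u : 'cV[R]_p) (c : 'I_t -> R),
    (forall i, a i (c i)) /\ r = (d1' *m u) 0 0 + \sum_(i < t) c i * d1e i.

End Trimming.

(* Main.v *)
Require Import Defs.
From HB Require Import structures.
From mathcomp Require Import all_boot all_order all_algebra.
From mathcomp Require Import mpoly.
Import GRing.Theory.
Local Open Scope ring_scope.

Lemma mxcol_eq0 (R : nmodType) (t c : nat) (p_ : 'I_t -> nat)
  (A : forall i, 'M[R]_(p_ i, c)) :
  \mxcol_i A i = 0 -> forall i, A i = 0.
Proof. by move=> H i; rewrite -(mxcolK A i) H submxcol0. Qed.

Lemma ent_NZN (R : comRingType) (x : R) (M : 'M[R]_(1,1)) :
  ((- x) *: (- M)) 0 0 = x * M 0 0.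
Proof. by rewrite !mxE mulrNN. Qed.

Lemma ent_NZ (R : comRingType) (x : R) (M : 'M[R]_(1,1)) :
  ((- x) *: M) 0 0 = (- M) 0 0 * x.
Proof. by rewrite !mxE !mulNr mulrC. Qed.

Lemma cone_complex (k : fieldType) (n : nat) (a b : nat -> nat)
  (dA : forall j, 'M[{mpoly k[n]}]_(a j, a j.+1))
  (dB : forall j, 'M[{mpoly k[n]}]_(b j, b j.+1))
  (phi : forall j, 'M[{mpoly k[n]}]_(b j, a j)) :
  mx_complex dA -> mx_complex dB -> mx_chain_map dA dB phi ->
  mx_complex (cone_diff dA dB phi).
Proof.
move=> HA HB Hc [|j].
  rewrite /= mul_row_block mulmxN Hc addNr mulmx0 add0r HB row_mx0 //.
rewrite /= mulmx_block mulmxN mulNmx opprK HA mul0mx addr0 mulmx0.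
by rewrite mul0mx addr0 mulmxN Hc addNr mulmx0 add0r HB block_mx0.
Qed.

Lemma cone_exact_succ (k : fieldType) (n : nat) (a b : nat -> nat)
  (dA : forall j, 'M[{mpoly k[n]}]_(a j, a j.+1))
  (dB : forall j, 'M[{mpoly k[n]}]_(b j, b j.+1))
  (phi : forall j, 'M[{mpoly k[n]}]_(b j, a j)) (j : nat) :
  mx_chain_map dA dB phi ->
  (forall z : 'cV_(b j.+2), dB j.+1 *m z = 0 -> exists u, z = dB j.+2 *m u) ->
  (forall (x : 'cV_(a j.+1)) (y : 'cV_(b j.+2)), dA j *m x = 0 ->
     phi j.+1 *m x + dB j.+1 *m y = 0 -> exists w, x = dA j.+1 *m w) ->
  forall v : 'cV_(cone_rank a b j.+2),
  cone_diff dA dB phi j.+1 *m v = 0 ->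
  exists w, v = cone_diff dA dB phi j.+2 *m w.
Proof.
move=> Hc HB HA v.
rewrite /= -[v]vsubmxK mul_block_col => /eqP; rewrite col_mx_eq0.
case/andP=> /eqP h1 /eqP h2.
move: h1 h2; set x := usubmx v; set y := dsubmx v => h1 h2.
have hx : dA j *m x = 0.
  by move: h1; rewrite mul0mx addr0 mulNmx => /eqP; rewrite oppr_eq0 => /eqP.
have [w hw] := HA x y hx h2.
have hz : dB j.+1 *m (y + phi j.+2 *m w) = 0.
  by rewrite mulmxDr mulmxA Hc -mulmxA -hw addrC.
have [u hu] := HB _ hz.
exists (col_mx (- w) u).
rewrite /= mul_block_col mulmxN mulNmx opprK -hw mul0mx addr0 mulmxN -hu.
by rewrite addrC addrK.
Qed.

Theorem theorem3p4 (k : fieldType) (n : nat)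
  (I : {mpoly k[n]} -> Prop) (p t : nat) (f : nat -> nat)
  (d : forall j, 'M[{mpoly k[n]}]_(res_rank p t f j, res_rank p t f j.+1))
  (HI : homogeneous_ideal I)
  (Hres : homog_free_resolution d I)
  (a : 'I_t -> {mpoly k[n]} -> Prop)
  (Ha : forall i, homogeneous_ideal (a i))
  (Hd0 : forall (i : 'I_t) (v : 'cV[{mpoly k[n]}]_(f 2%N)), a i ((d20 d *m v) i 0))
  (g : 'I_t -> nat -> nat)
  (m : forall i j, 'M[{mpoly k[n]}]_(res_rank0 (g i) j, res_rank0 (g i) j.+1))
  (Hm : forall i, homog_free_resolution (m i) (a i))
  (q : forall i j, 'M[{mpoly k[n]}]_(g i j.+1, f j.+2))
  (Hq1 : forall i, (m i 0%N : 'M_(1, g i 1%N)) *m q i 0%N = row i (d20 d))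
  (Hqk : forall i j, (m i j.+1 : 'M_(g i j.+1, g i j.+2)) *m q i j.+1
                     = q i j *m (d j.+2 : 'M_(f j.+2, f j.+3))) :
  mx_chain_map (T_diff d) (B_diff d m) (trim_map d q) /\
  free_resolution (cone_diff (T_diff d) (B_diff d m) (trim_map d q))
                  (trim_ideal d a).
Proof.
have [[_ Fcx Fex _] _] := Hres.
have Gres i := (Hm i).1.
have Hd12 : d1' d *m d2' d + rsubmx (d1 d) *m d20 d = 0.
  by rewrite -mul_row_col hsubmxK vsubmxK; apply: (Fcx 0%N).
have Hrs : rsubmx (d1 d) *m d20 d = \sum_i d1e d i *: row i (d20 d).
  apply/matrixP=> x y; rewrite !mxE summxE; apply eq_bigr => i _.
  by rewrite !mxE /d1e mxE (ord1 x).
have Hbeta c (y : 'M_((\sum_i g i 1)%N, c)) :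
    beta d m *m y = \sum_i (- d1e d i) *: ((m i 0%N : 'M_(1, g i 1%N)) *m submxcol y i).
  rewrite -{1}(submxcolK y) /beta mul_mxrow_mxcol; apply: eq_bigr => i _.
  by rewrite scalemxAl.
have HG j c (y : 'M_((\sum_i g i j.+2)%N, c)) :
    Gdiag m j *m y = \mxcol_i ((m i j.+1 : 'M_(g i j.+1, g i j.+2)) *m submxcol y i).
  rewrite -{1}(submxcolK y) /Gdiag mul_mxblock_mxrow; apply: eq_mxcol => i.
  rewrite (bigD1 i) //= eqxx conform_mx_id big1 ?addr0 // => i' /negbTE.
  by rewrite eq_sym => ->; rewrite mul0mx.
have Hchain : mx_chain_map (T_diff d) (B_diff d m) (trim_map d q).
  rewrite /mx_chain_map; case=> [|j].
    change (beta d m *m \mxcol_i q i 0%N = d1' d *m d2' d).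
    have /eqP := Hd12; rewrite addr_eq0 => /eqP ->.
    rewrite Hbeta Hrs -sumrN; apply: eq_bigr => i _.
    by rewrite mxcolK Hq1 scaleNr.
  change (Gdiag m j *m \mxcol_i q i j.+1 = \mxcol_i q i j *m d j.+2).
  rewrite HG mxcol_mul; apply: eq_mxcol => i; rewrite mxcolK; exact: Hqk.
have HGs j i : submxcol (Gdiag m j) i = (m i j.+1 : 'M_(g i j.+1, g i j.+2)) *m submxcol 1%:M i.
  by rewrite -[Gdiag m j]mulmx1 HG mxcolK.
have Gcx i : mx_complex (m i) by case: (Gres i).
have Gexi i : mx_exact_pos (m i) by case: (Gres i).
have Gid i : forall r, a i r <-> exists (w : 'cV_(g i 1%N)) (i0 : 'I_1), ((m i 0%N : 'M_(1, g i 1%N)) *m w) i0 0 = r by case: (Gres i).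
have HGm j i : (m i j : 'M_(res_rank0 (g i) j, g i j.+1)) *m submxcol (Gdiag m j) i = 0.
  by rewrite (HGs j i) mulmxA (Gcx i j) mul0mx.
have Tcx : mx_complex (T_diff d).
  case=> [|j].
    change (d2' d *m d 2 = 0).
    by rewrite /d2' mul_usub_mx (Fcx 1%N) linear0.
  exact: (Fcx j.+2).
have Bcx : mx_complex (B_diff d m).
  case=> [|j].
    change (beta d m *m Gdiag m 0 = 0).
    rewrite Hbeta; apply: big1 => i _.
    by rewrite (HGm 0%N i) scaler0.
  change (Gdiag m j *m Gdiag m j.+1 = 0).
  rewrite HG -(mxcol0 (p_ := fun i => g i j.+1)); apply: eq_mxcol => i.
  exact: (HGm j.+1 i).
have Gex j (z : 'cV_((\sum_i g i j.+2)%N)) :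
    Gdiag m j *m z = 0 -> exists u, z = Gdiag m j.+1 *m u.
  rewrite HG => /mxcol_eq0 hz.
  have [u hu] : exists u : forall i, 'cV_(g i j.+3),
      forall i, submxcol z i = (m i j.+2 : 'M_(g i j.+2, g i j.+3)) *m u i.
    apply: (@fin_all_exists _ (fun i => 'cV[{mpoly k[n]}]_(g i j.+3)) (fun i u => submxcol z i = (m i j.+2 : 'M_(g i j.+2, g i j.+3)) *m u)) => i;
    exact: (Gexi i j.+1 _ (hz i)).
  exists (\mxcol_i u i); rewrite HG -[LHS]submxcolK; apply: eq_mxcol => i.
  by rewrite mxcolK hu.
split=> //; split=> //.
- exact: cone_complex.
- case=> [|j] v.
    change (row_mx (d1' d) (beta d m) *m v = 0 -> exists w : 'cV_(f 2 + (\sum_i g i 2))%N,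
      v = block_mx (- d2' d) 0 (\mxcol_i q i 0%N) (Gdiag m 0) *m w).
    rewrite -[v]vsubmxK mul_row_col Hbeta; set x := usubmx v; set y := dsubmx v => h.
    pose u : 'cV_t := \col_i (- ((m i 0%N : 'M_(1, g i 1%N)) *m submxcol y i) 0 0).
    have hu : d 0%N *m col_mx x u = 0.
      change (d1 d *m col_mx x u = 0).
      rewrite -[d1 d]hsubmxK mul_row_col -h; congr (_ + _).
      apply/matrixP => r s; rewrite !mxE summxE; apply: eq_bigr => i _.
      rewrite !mxE (ord1 r) (ord1 s) /d1e mxE mulrN mulNr //.
    have [w hw] := Fex 0%N _ hu.
    have hw' : col_mx x u = col_mx (d2' d *m w) (d20 d *m w).
      by rewrite -mul_col_mx /d2' /d20 vsubmxK.
    case: (eq_col_mx hw') => hx hu'.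
    have hz i : (m i 0%N : 'M_(1, g i 1%N)) *m (submxcol y i + q i 0%N *m w) = 0.
      rewrite mulmxDr mulmxA Hq1 -row_mul -hu'.
      by apply/matrixP => r s; rewrite (ord1 r) (ord1 s) !mxE subrr.
    have [z hz'] : exists z : forall i, 'cV_(g i 2),
        forall i, submxcol y i + q i 0%N *m w = (m i 1%N : 'M_(g i 1%N, g i 2)) *m z i.
      apply: (@fin_all_exists _ (fun i => 'cV[{mpoly k[n]}]_(g i 2))
        (fun i zz => submxcol y i + q i 0%N *m w = (m i 1%N : 'M_(g i 1%N, g i 2)) *m zz)) => i.
      exact: (Gexi i 0%N _ (hz i)).
    exists (col_mx (- w) (\mxcol_i z i)).
    rewrite mul_block_col mulmxN mulNmx opprK -hx mul0mx addr0 mulmxN HG mxcol_mul.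
    congr col_mx; rewrite -mxcolN -mxcolD -[LHS]submxcolK; apply: eq_mxcol => i.
    by rewrite mxcolK -hz' addrC addrK.
  move: v; refine (@cone_exact_succ k n _ _ _ _ _ j Hchain _ _).
    by move=> z; exact: Gex j z.
  case: j => [|j] x y hx hy; last exact: Fex j.+2 x hx.
  change (d2' d *m x = 0) in hx.
  change (\mxcol_i q i 0%N *m x + Gdiag m 0 *m y = 0) in hy.
  move: hy; rewrite mxcol_mul HG -mxcolD => /mxcol_eq0 hy.
  have h20 : d20 d *m x = 0.
    apply/matrixP => i r.
    have e : row i (d20 d *m x) = 0.
      have /eqP := hy i; rewrite addr_eq0 => /eqP e.
      by rewrite row_mul -Hq1 -mulmxA e mulmxN mulmxA (Gcx i 0%N) mul0mx oppr0.
    by move/matrixP: e => /(_ 0 r); rewrite !mxE => ->.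
  have hd1 : d 1%N *m x = 0.
    change (d2 d *m x = 0); rewrite -[d2 d]vsubmxK mul_col_mx.
    change (col_mx (d2' d *m x) (d20 d *m x) = 0).
    by rewrite hx h20 col_mx0.
  exact: Fex 1%N x hd1.
- move=> r; split.
    case=> u [c [hc ->]].
    have [w hw] : exists w : forall i, 'cV_(g i 1%N),
        forall i, ((m i 0%N : 'M_(1, g i 1%N)) *m w i) 0 0 = c i.
      apply: (@fin_all_exists _ (fun i => 'cV[{mpoly k[n]}]_(g i 1%N))
        (fun i ww => ((m i 0%N : 'M_(1, g i 1%N)) *m ww) 0 0 = c i)) => i.
      have [ww [i0 e]] := (Gid i (c i)).1 (hc i).
      by exists ww; rewrite -e (ord1 i0).
    exists (col_mx u (\mxcol_i (- w i))), 0.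
    change ((row_mx (d1' d) (beta d m) *m col_mx u (\mxcol_i (- w i))) 0 0
      = (d1' d *m u) 0 0 + \sum_i c i * d1e d i).
    rewrite mul_row_col Hbeta mxE; congr (_ + _).
    rewrite summxE; apply: eq_bigr => i _.
    by rewrite mxcolK mulmxN ent_NZN hw mulrC.
  case=> w [i0 <-].
  rewrite (ord1 i0).
  change (trim_ideal d a ((row_mx (d1' d) (beta d m) *m w) 0 0)).
  rewrite -[w]vsubmxK mul_row_col Hbeta mxE summxE.
  exists (usubmx w), (fun i => ((m i 0%N : 'M_(1, g i 1%N)) *m - submxcol (dsubmx w) i) 0 0); split.
    move=> i; apply/(Gid i); by exists (- submxcol (dsubmx w) i), 0.
  congr (_ + _); apply: eq_bigr => i _.
  by rewrite mulmxN ent_NZ.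
Qed.
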